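(* Let $R$ be a finite commutative ring and let $C\subseteq R^n$ be a (not necessarily linear) code with $|C|\ge 2$, locality $r\ge 1$, minimum distance $d$, and let $\kappa$ be the minimum size of an information set of $C$. Then $$d\le n-\kappa-\left\lceil\frac{\kappa}{r}\right\rceil+2 \qquad\text{and}\qquad \frac{\kappa}{n}\le\frac{r}{r+1}.$$
   Context: For $S\subseteq\{1,\dots,n\}$, $C_S$ denotes the punctured code obtained by keeping only the coordinates in $S$. $S$ is an information set if $|C_S|=|C|$; $\kappa$ is the minimum cardinality of an information set. A coordinate $i$ has locality $r$ if there is $S_i\subseteq\{1,\dots,n\}\setminus\{i\}$ with $|S_i|\le r$ and $|C_{S_i}|=|C_{S_i\cup\{i\}}|$ (a recovering set for $i$). $C$ has locality $r$ if every coordinate has locality $r$. $d$ is the minimum Hamming distance between distinct codewords. *)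

(* Defs.v *)
From mathcomp Require Import all_boot all_order all_algebra.
Set Implicit Arguments.
Unset Strict Implicit.
Unset Printing Implicit Defensive.

Section Codes.
Variables (A : finType) (n : nat).
Notation word := {ffun 'I_n -> A}.

Definition puncture (S : {set 'I_n}) (c : word) : {ffun 'I_n -> option A} :=
  [ffun i => if i \in S then Some (c i) else None].

Definition punct_code (C : {set word}) (S : {set 'I_n}) :=
  [set puncture S c | c in C].

Definition info_set (C : {set word}) (S : {set 'I_n}) : bool :=
  #|punct_code C S| == #|C|.

Definition is_min_info_size (C : {set word}) (k : nat) : Prop :=
  (exists S, info_set C S /\ #|S| = k) /\
  (forall S, info_set C S -> k <= #|S|).

Definition recovering_set (C : {set word}) (r : nat) (i : 'I_n)
  (S : {set 'I_n}) : bool :=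
  [&& i \notin S, #|S| <= r & #|punct_code C S| == #|punct_code C (i |: S)|].

Definition has_locality (C : {set word}) (r : nat) : Prop :=
  forall i : 'I_n, exists S : {set 'I_n}, recovering_set C r i S.

Definition hamming (c c' : word) : nat := #|[set i | c i != c' i]|.

Definition is_min_dist (C : {set word}) (d : nat) : Prop :=
  (exists c, exists c', [/\ c \in C, c' \in C, c != c' & hamming c c' = d]) /\
  (forall c c', c \in C -> c' \in C -> c != c' -> d <= hamming c c').

End Codes.

(* ceiling of a / b for b >= 1 *)
Definition ceil_div (a b : nat) : nat := (a + b.-1) %/ b.

(* Main.v *)
Require Import Defs.
From mathcomp Require Import all_boot all_order all_algebra.
From mathcomp Require Import zify.

Set Implicit Arguments.
Unset Strict Implicit.
Unset Printing Implicit Defensive.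

Definition agree (A : finType) (n : nat) (S : {set 'I_n}) (c c' : {ffun 'I_n -> A}) :=
  forall i, i \in S -> c i = c' i.

Definition detm (A : finType) (n : nat) (C : {set {ffun 'I_n -> A}}) (B T : {set 'I_n}) :=
  forall c c', c \in C -> c' \in C -> agree B c c' -> agree T c c'.

Lemma punctP (A : finType) (n : nat) (S : {set 'I_n}) (c c' : {ffun 'I_n -> A}) :
  puncture S c = puncture S c' <-> agree S c c'.
Proof.
split.
- move/ffunP => H i iS; have := H i; rewrite !ffunE iS; by case.
- move=> H; apply/ffunP => i; rewrite !ffunE; case: ifP => // iS; by rewrite H.
Qed.

Lemma det_card (A : finType) (n : nat) (C : {set {ffun 'I_n -> A}}) (B T : {set 'I_n}) :
  B \subset T -> #|punct_code C B| = #|punct_code C T| -> detm C B T.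
Proof.
move=> sBT Hc.
pose f := fun w : {ffun 'I_n -> option A} => [ffun i => if i \in B then w i else None].
have fE c : f (puncture T c) = puncture B c.
  apply/ffunP=> i; rewrite /f /puncture !ffunE; case: ifP => // iB.
  by rewrite (subsetP sBT _ iB).
have eqB : punct_code C B = f @: punct_code C T.
  rewrite /punct_code -imset_comp; apply: eq_imset => c /=; by rewrite fE.
have /imset_injP injf : #|f @: punct_code C T| == #|punct_code C T| by rewrite -eqB Hc.
move=> c c' cC c'C /punctP E; apply/punctP; apply: injf.
- exact: imset_f.
- exact: imset_f.
by rewrite !fE.
Qed.

Lemma info_inj (A : finType) (n : nat) (C : {set {ffun 'I_n -> A}}) S :
  info_set C S -> forall c c', c \in C -> c' \in C -> agree S c c' -> c = c'.
Proof. rewrite /info_set /punct_code => /imset_injP inj c c' cC c'C /punctP; exact: inj. Qed.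

Lemma inj_info (A : finType) (n : nat) (C : {set {ffun 'I_n -> A}}) S :
  (forall c c', c \in C -> c' \in C -> agree S c c' -> c = c') -> info_set C S.
Proof. move=> H; apply/imset_injP => c c' cC c'C /punctP; exact: H. Qed.

Lemma det_info (A : finType) (n : nat) (C : {set {ffun 'I_n -> A}}) B T :
  detm C B T -> info_set C T -> info_set C B.
Proof.
move=> D I; apply: inj_info => c c' cC c'C ag; apply: (info_inj I) => //; exact: D.
Qed.

Lemma det_full (A : finType) (n : nat) (C : {set {ffun 'I_n -> A}}) B T :
  detm C B T -> (forall j, j \in T) -> info_set C B.
Proof.
move=> D full; apply: inj_info => c c' cC c'C ag; apply/ffunP => i.
exact: (D _ _ cC c'C ag i (full i)).
Qed.

Lemma not_info (A : finType) (n : nat) (C : {set {ffun 'I_n -> A}}) S :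
  ~~ info_set C S -> exists c c', [/\ c \in C, c' \in C, c != c' & agree S c c'].
Proof.
move=> nI; case: (boolP [exists c in C, exists c' in C,
    (c != c') && (puncture S c == puncture S c')]).
- case/exists_inP => c cC /exists_inP [c' c'C /andP [ne /eqP E]].
  exists c, c'; split => //; exact/punctP.
- move=> H; case/negP: nI; apply: inj_info => c c' cC c'C /punctP E.
  apply/eqP; apply/negPn/negP => ne; case/negP: H; apply/exists_inP; exists c => //.
  apply/exists_inP; exists c' => //; by rewrite ne E eqxx.
Qed.

Lemma ham_le (A : finType) (n : nat) S (c c' : {ffun 'I_n -> A}) :
  agree S c c' -> hamming c c' + #|S| <= n.
Proof.
move=> ag; have sub : [set i | c i != c' i] \subset ~: S.
  apply/subsetP => i; rewrite !inE; apply: contra => iS; by rewrite ag.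
have := subset_leq_card sub; have := cardsC S; rewrite card_ord /hamming => h1 h2; apply: leq_trans (_ : _ <= #|~: S| + #|S|) _; [by rewrite leq_add2r | by rewrite addnC h1].
Qed.

Lemma step (A : finType) (n : nat) (C : {set {ffun 'I_n -> A}}) (r : nat) (B T : {set 'I_n}) (j : 'I_n) (S : {set 'I_n}) :
  B \subset T -> detm C B T -> j \notin T -> j \notin S -> #|S| <= r ->
  detm C S [set j] ->
  exists (B' T' : {set 'I_n}) (a : nat), [/\ B' \subset T', detm C B' T', a <= r, #|B'| = #|B| + a &
                    #|T'| = (#|T| + a).+1].
Proof.
move=> sBT D jT jS cS DS.
exists (B :|: (S :\: T)), (j |: (T :|: (S :\: T))), #|S :\: T|; split.
- apply/subsetP => i; rewrite !inE => /orP [/(subsetP sBT) -> | /andP [-> ->]];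
  by rewrite ?orbT.
- move=> c c' cC c'C ag.
  have agB : agree B c c' by move=> i iB; apply: ag; rewrite inE iB.
  have agT := D _ _ cC c'C agB.
  have agS : agree S c c'.
    move=> i iS; case iT: (i \in T); first exact: agT.
    by apply: ag; rewrite !inE iT iS orbT.
  have := DS _ _ cC c'C agS j; rewrite inE eqxx => /(_ isT) Hj.
  move=> i; rewrite !inE => /orP [/eqP -> // | /orP [iT | iU]]; first exact: agT.
  by apply: ag; rewrite !inE iU orbT.
- apply: leq_trans cS; apply: subset_leq_card; exact: subsetDl.
- rewrite cardsU.
  have -> : B :&: (S :\: T) = set0.
    apply/setP => i; rewrite !inE; case iB: (i \in B) => //=.
    by rewrite (subsetP sBT _ iB).
  by rewrite cards0 subn0.
- rewrite cardsU1 cardsU.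
  have -> : T :&: (S :\: T) = set0.
    by apply/setP => i; rewrite !inE; case: (i \in T).
  rewrite cards0 subn0 !inE negb_or jT /= jS /=; lia.
Qed.

Lemma loc_det (A : finType) (n : nat) (C : {set {ffun 'I_n -> A}}) r :
  has_locality C r ->
  forall j : 'I_n, exists S : {set 'I_n}, [/\ j \notin S, #|S| <= r & detm C S [set j]].
Proof.
move=> loc j; have [S /and3P [jS cS /eqP E]] := loc j.
exists S; split => //.
have D := det_card (subsetUr [set j] S) E.
move=> c c' cC c'C ag i; rewrite inE => /eqP ->.
by apply: (D _ _ cC c'C ag); rewrite !inE eqxx.
Qed.

Lemma full_card (n : nat) (T : {set 'I_n}) j : j \notin T -> #|T| < n.
Proof.
move=> jT; apply: leq_trans (_ : _ < #|[set: 'I_n]|) _.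
  apply: proper_card; apply/properP; split; first exact: subsetT.
  by exists j; rewrite ?inE.
by rewrite cardsT card_ord.
Qed.

Lemma card_le (n : nat) (T : {set 'I_n}) : #|T| <= n.
Proof. exact: leq_trans (max_card _) (eq_leq (card_ord n)). Qed.

Lemma rate_lemma (A : finType) (n : nat) (C : {set {ffun 'I_n -> A}}) r :
  has_locality C r -> forall k (B T : {set 'I_n}), n - #|T| <= k -> B \subset T -> detm C B T ->
  r.+1 * #|B| <= r * #|T| -> exists B' : {set 'I_n}, info_set C B' /\ r.+1 * #|B'| <= r * n.
Proof.
move=> loc; elim => [|k IH] B T hk sBT D inv;
  (case: (pickP (fun j => j \notin T)) => [j jT | allin]); last first.
- exists B; split.
    apply: (det_full D) => j; by have := allin j => /= /negbFE.
  have h := card_le T; apply: leq_trans inv _; by rewrite leq_mul2l h orbT.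
- have [S [jS cS DS]] := loc_det loc j.
  have [B' [T' [a [s' D' ar eB eT]]]] := step sBT D jT jS cS DS.
  apply: (IH B' T') => //.
    have := card_le T'; lia.
  rewrite eB eT; nia.
- exists B; split.
    apply: (det_full D) => j; by have := allin j => /= /negbFE.
  have h := card_le T; apply: leq_trans inv _; by rewrite leq_mul2l h orbT.
- have := full_card jT; lia.
Qed.

Lemma ar1 (r b t a k : nat) : b <= t -> r.+1 * b <= r * t -> r * (t - b + 1) < k -> a <= r -> b + a < k.
Proof. nia. Qed.
Lemma ar2 (r b t a : nat) : r.+1 * b <= r * t -> a <= r -> r.+1 * (b + a) <= r * (t + a).+1.
Proof. nia. Qed.
Lemma ar3 (r k t : nat) : 1 <= r -> k <= r * (t+1) -> (k + r.-1) %/ r <= t + 1.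
Proof. move=> r1 h. rewrite -ltnS ltn_divLR //. nia. Qed.

Lemma phase1 (A : finType) (n : nat) (C : {set {ffun 'I_n -> A}}) r kappa :
  has_locality C r -> (forall S, info_set C S -> kappa <= #|S|) ->
  forall k (B T : {set 'I_n}), n - #|T| <= k -> B \subset T -> detm C B T ->
  r.+1 * #|B| <= r * #|T| -> #|B| < kappa ->
  exists B' T' : {set 'I_n}, [/\ B' \subset T', detm C B' T', #|B'| < kappa &
     kappa <= r * (#|T'| - #|B'| + 1)].
Proof.
move=> loc mn; elim => [|k IH] B T hk sBT D inv bk.
  case: (leqP kappa (r * (#|T| - #|B| + 1))) => [h|h]; first by exists B, T.
  case: (pickP (fun j => j \notin T)) => [j jT | allin].
    have := full_card jT; lia.
  have := mn _ (det_full D (fun j => negbFE (allin j))); lia.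
case: (leqP kappa (r * (#|T| - #|B| + 1))) => [h|h]; first by exists B, T.
case: (pickP (fun j => j \notin T)) => [j jT | allin]; last first.
  have := mn _ (det_full D (fun j => negbFE (allin j))); lia.
have [S [jS cS DS]] := loc_det loc j.
have [B' [T' [a [s' D' ar eB eT]]]] := step sBT D jT jS cS DS.
apply: (IH B' T') => //.
- have := card_le T'; lia.
- rewrite eB eT; exact: ar2.
- rewrite eB; apply: ar1 h ar => //; exact: subset_leq_card.
Qed.

Lemma phase2 (A : finType) (n : nat) (C : {set {ffun 'I_n -> A}}) kappa :
  (forall S, info_set C S -> kappa <= #|S|) ->
  forall k (B T : {set 'I_n}), #|B| + k = kappa.-1 -> 0 < kappa -> B \subset T -> detm C B T ->
  exists T' : {set 'I_n}, ~~ info_set C T' /\ #|T| - #|B| + kappa.-1 <= #|T'|.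
Proof.
move=> mn; elim => [|k IH] B T hk kp sBT D.
  exists T; split.
    apply/negP => /(det_info D) /mn; lia.
  have := subset_leq_card sBT; lia.
case: (pickP (fun j => j \notin T)) => [j jT | allin]; last first.
  have := mn _ (det_full D (fun j => negbFE (allin j))); lia.
have jB : j \notin B by apply: contra jT; exact: (subsetP sBT).
have e1 : #|j |: B| + k = kappa.-1.
  by rewrite cardsU1 jB add1n addSn -addnS.
have s1 : j |: B \subset j |: T by exact: setUS.
have D1 : detm C (j |: B) (j |: T).
  move=> c c' cC c'C ag i; rewrite !inE => /orP [/eqP -> | iT].
    by apply: ag; rewrite !inE eqxx.
  apply: (D _ _ cC c'C) => // l lB; apply: ag; by rewrite inE lB orbT.
have [T' [nI hT']] := IH (j |: B) (j |: T) e1 kp s1 D1.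
exists T'; split => //; move: hT'; rewrite !cardsU1 jT jB /= !add1n subSS; lia.
Qed.

Theorem mainTheorem2 (R : finComNzRingType) (n : nat)
  (C : {set {ffun 'I_n -> R}}) (r d kappa : nat) :
  2 <= #|C| -> 1 <= r -> has_locality C r ->
  is_min_dist C d -> is_min_info_size C kappa ->
  (* d <= n - kappa - ceil(kappa/r) + 2, without truncated subtraction *)
  d + kappa + ceil_div kappa r <= n + 2 /\
  (* kappa / n <= r / (r+1) *)
  kappa * r.+1 <= r * n.
Proof.
move=> C2 r1 loc [[c0 [c1 [c0C c1C ne01 hd]]] dmin] [_ mn].
have D0 : detm C set0 set0 by move=> c c' _ _ _ i; rewrite inE.
have inv0 : r.+1 * #|@set0 'I_n| <= r * #|@set0 'I_n| by rewrite cards0 muln0.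
have ag0 : agree set0 c0 c1 by move=> i; rewrite inE.
split; last first.
  have [B' [I hB]] := @rate_lemma _ _ C r loc n set0 set0
    (leq_subr _ _) (sub0set _) D0 inv0.
  have := mn _ I; nia.
case: (posnP kappa) => [->|kp].
  have := @ham_le _ _ set0 c0 c1 ag0.
  rewrite /ceil_div add0n divn_small; last by lia.
  rewrite hd; lia.
have b0 : #|@set0 'I_n| < kappa by rewrite cards0.
have [B [T [sBT D bk hk]]] := @phase1 _ _ C r kappa loc mn n set0 set0
  (leq_subr _ _) (sub0set _) D0 inv0 b0.
have e0 : #|B| + (kappa.-1 - #|B|) = kappa.-1 by lia.
have [T' [nI hT']] := @phase2 _ _ C kappa mn (kappa.-1 - #|B|) B T
  e0 kp sBT D.
have [c [c' [cC c'C ne ag]]] := not_info nI.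
have hd' := dmin _ _ cC c'C ne.
have hh := ham_le ag.
have := @ar3 r kappa (#|T| - #|B|) r1 hk.
rewrite /ceil_div; lia.
Qed.
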